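(* Let $\{\varphi_\alpha\}$ be a net in $MA(G,\sigma)$ such that (i) $\varphi_\alpha\to1$ pointwise on $G$, (ii) $\sup_\alpha\|M_{\varphi_\alpha}\|<\infty$, and (iii) for each $\alpha$ there is $\kappa_\alpha:G\to[1,\infty)$ such that $G$ is $\kappa_\alpha$-decaying and $\|\varphi_\alpha\kappa_\alpha\|_\infty<\infty$. Then $\{\varphi_\alpha\}$ is a bounded Fourier summing net for $(G,\sigma)$.
   Context: $G$ is a discrete group, $\sigma:G\times G\to\mathbb{T}$ a normalized 2-cocycle ($\sigma(g,h)\sigma(gh,k)=\sigma(h,k)\sigma(g,hk)$, $\sigma(g,e)=\sigma(e,g)=1$); $\Lambda_\sigma(g)$ is the unitary on $\ell^2(G)$ with $(\Lambda_\sigma(g)\xi)(h)=\sigma(g,g^{-1}h)\xi(g^{-1}h)$, $\lambda=\Lambda_1$; $C^*_r(G,\sigma)$ is the operator-norm closure of $\mathrm{span}\,\Lambda_\sigma(G)$; for $x\in C^*_r(G,\sigma)$, $\widehat x=x\delta_e$. For $\varphi:G\to\mathbb{C}$, $M_\varphi$ is the linear map on $\mathrm{span}\,\Lambda_\sigma(G)$ with $M_\varphi(\Lambda_\sigma(g))=\varphi(g)\Lambda_\sigma(g)$; $\varphi\in MA(G,\sigma)$ if it is bounded in operator norm, and then $M_\varphi$ denotes the extension to $C^*_r(G,\sigma)$. $MCF(G,\sigma)$ is the set of $\varphi$ such that $\sum_g\varphi(g)\widehat x(g)\Lambda_\sigma(g)$ converges in operator norm for all $x$. A Fourier summing net for $(G,\sigma)$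 is a net $\{\varphi_\alpha\}\subseteq MCF(G,\sigma)$ with $M_{\varphi_\alpha}(x)\to x$ in norm for all $x\in C^*_r(G,\sigma)$; bounded means $\sup_\alpha\|M_{\varphi_\alpha}\|<\infty$. $\mathcal{K}(G)$ = finitely supported functions, $\pi_\lambda(f)=\sum_g f(g)\lambda(g)$; for $\kappa:G\to[1,\infty)$, $\|\xi\|_{2,\kappa}=\|\xi\kappa\|_2$, and $G$ is $\kappa$-decaying if $f\mapsto\pi_\lambda(f)$ is bounded from $(\mathcal{K}(G),\|\cdot\|_{2,\kappa})$ to $C^*_r(G,1)$ with operator norm. *)

(* Defs.v *)
From HB Require Import structures.
From mathcomp Require Import all_boot all_order all_algebra.
From mathcomp Require Import complex.
Import Normc.
From mathcomp Require Import all_classical all_reals all_analysis.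

Set Implicit Arguments.
Unset Strict Implicit.
Unset Printing Implicit Defensive.

Import Order.TTheory GRing.Theory Num.Theory.
Local Open Scope ring_scope.

(* Discrete groups: MathComp's (not necessarily finite) groupType, whose
   carrier is a choiceType. *)

Section TwistedGroupCstar.
Variables (R : realType) (G : groupType).
Local Notation C := R[i].

(* vectors (functions G -> C) and operators on them; only their action on
   l^2(G) is ever looked at *)
Definition vec := G -> C.
Definition op := vec -> vec.

Definition l2sq (xi : vec) : \bar R :=
  (\esum_(g in [set: G]) ((normc (xi g)) ^+ 2)%:E)%E.
Definition l2norm (xi : vec) : \bar R :=
  match l2sq xi with
  | EFin r => (Num.sqrt r)%:E
  | _ => +oo%E
  end.

Definition opnorm (T : op) : \bar R :=
  ereal_sup [set l2norm (T xi) | xi in [set xi | (l2norm xi <= 1%:E)%E]].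

Definition opsub (T S : op) : op := fun xi g => T xi g - S xi g.

Definition is_cocycle (sigma : G -> G -> C) : Prop :=
  [/\ (forall g h, normc (sigma g h) = 1),
      (forall g h k, sigma g h * sigma (g * h)%g k = sigma h k * sigma g (h * k)%g)
    & (forall g, sigma g 1%g = 1 /\ sigma 1%g g = 1)].

Definition trivial_cocycle : G -> G -> C := fun _ _ => 1.

Definition Lambda (sigma : G -> G -> C) (g : G) : op :=
  fun xi h => sigma g (g^-1 * h)%g * xi (g^-1 * h)%g.

(* the element  sum_i c_i Lambda_sigma(g_i)  of span Lambda_sigma(G),
   given by the list of pairs (c_i, g_i) *)
Definition lincomb (sigma : G -> G -> C) (s : seq (C * G)) : op :=
  fun xi h => \sum_(p <- s) p.1 * Lambda sigma p.2 xi h.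

(* M_phi on span Lambda_sigma(G) *)
Definition mult (phi : G -> C) (s : seq (C * G)) : seq (C * G) :=
  [seq (phi p.2 * p.1, p.2) | p <- s].

(* x belongs to C*_r(G,sigma): operator-norm limit of span Lambda_sigma(G) *)
Definition in_Cr (sigma : G -> G -> C) (x : op) : Prop :=
  forall e : R, 0 < e -> exists s, (opnorm (opsub x (lincomb sigma s)) < e%:E)%E.

Definition MAnorm (sigma : G -> G -> C) (phi : G -> C) : \bar R :=
  ereal_sup [set opnorm (lincomb sigma (mult phi s))
            | s in [set s | (opnorm (lincomb sigma s) <= 1%:E)%E]].

Definition in_MA (sigma : G -> G -> C) (phi : G -> C) : Prop :=
  (MAnorm sigma phi < +oo)%E.

(* y = M_phi(x), M_phi being the continuous extension to C*_r(G,sigma) *)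
Definition Mext (sigma : G -> G -> C) (phi : G -> C) (x y : op) : Prop :=
  forall e : R, 0 < e -> exists2 d : R, 0 < d &
    forall s, (opnorm (opsub x (lincomb sigma s)) < d%:E)%E ->
              (opnorm (opsub y (lincomb sigma (mult phi s))) < e%:E)%E.

Definition delta_e : vec := fun g => if g == 1%g then 1 else 0.

Definition hat (x : op) : vec := x delta_e.

(* phi in MCF(G,sigma): sum_g phi(g) \hat x(g) Lambda_sigma(g) converges
   (unconditionally, along the net of finite subsets of G) in operator norm *)
Definition in_MCF (sigma : G -> G -> C) (phi : G -> C) : Prop :=
  forall x, in_Cr sigma x ->
  exists y : op, forall e : R, 0 < e -> exists F0 : seq G,
    forall F : seq G, uniq F -> {subset F0 <= F} ->
      (opnorm (opsub y (lincomb sigma [seq ((phi g * hat x g)%R, g) | g <- F]))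
         < e%:E)%E.

Definition decaying (kappa : G -> R) : Prop :=
  exists K : R, forall (F : seq G) (f : G -> C), uniq F ->
    (opnorm (lincomb trivial_cocycle [seq (f g, g) | g <- F])
      <= (K * Num.sqrt (\sum_(g <- F) (normc (f g) * kappa g) ^+ 2))%R%:E)%E.

End TwistedGroupCstar.

Definition directed (A : Type) (le : A -> A -> Prop) : Prop :=
  [/\ inhabited A, (forall a, le a a),
      (forall a b c, le a b -> le b c -> le a c)
    & (forall a b, exists c, le a c /\ le b c)].

Definition bounded_Fourier_summing_net (R : realType) (G : groupType)
    (sigma : G -> G -> R[i]) (A : Type) (le : A -> A -> Prop)
    (phi : A -> G -> R[i]) : Prop :=
  [/\ (forall a, in_MCF sigma (phi a)),
      (exists B : R, forall a, (MAnorm sigma (phi a) <= B%:E)%E),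
      (forall a x, in_Cr sigma x -> exists y, Mext sigma (phi a) x y)
    & (forall x, in_Cr sigma x -> forall e : R, 0 < e ->
        exists a0, forall a, le a0 a ->
          forall y, Mext sigma (phi a) x y ->
            (opnorm (opsub y x) < e%:E)%E)].

(* Main.v *)
Require Import Defs.
From HB Require Import structures.
From mathcomp Require Import all_boot all_order all_algebra.
From mathcomp Require Import complex.
Import Normc.
From mathcomp Require Import all_classical all_reals all_analysis.
From mathcomp Require Import ring lra.
Import Order.TTheory GRing.Theory Num.Theory.
Local Open Scope ring_scope.
Local Open Scope classical_set_scope.
Local Open Scope complex_scope.
Set Implicit Arguments.
Unset Strict Implicit.
Unset Printing Implicit Defensive.
Set Warnings "-notation-overridden,-ambiguous-paths,-notation-incompatible-prefix".
Section Aux.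
Variables (R : realType) (G : groupType).
Local Notation C := R[i].
Implicit Types (xi : G -> C).

Definition sq (xi : G -> C) (D : seq G) : R := \sum_(g <- D) normc (xi g) ^+ 2.
Definition L2 (xi : G -> C) (r : R) :=
  0 <= r /\ forall D, uniq D -> Num.sqrt (sq xi D) <= r.

Lemma normc_ge0 (z : C) : 0 <= normc z.
Proof. by case: z => a b; rewrite /normc sqrtr_ge0. Qed.

Lemma sq_ge0 xi D : 0 <= sq xi D.
Proof. by apply: sumr_ge0 => g _; rewrite exprn_ge0 // normc_ge0. Qed.

Lemma sqrt_leP (a r : R) : 0 <= a -> 0 <= r -> (Num.sqrt a <= r) = (a <= r ^+ 2).
Proof.
move=> a0 r0; rewrite -{1}(@ger0_norm _ r) // -sqrtr_sqr ler_sqrt //.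
exact: sqr_ge0.
Qed.

Lemma l2sq_le xi c : (forall D, uniq D -> sq xi D <= c) -> (l2sq xi <= c%:E)%E.
Proof.
move=> H; apply: ge_ereal_sup => _ [X [finX _] <-].
rewrite fsbig_finite //= sumEFin lee_fin; apply: H; exact: finmap.fset_uniq.
Qed.

Lemma l2sq_ge xi D : uniq D -> ((sq xi D)%:E <= l2sq xi)%E.
Proof.
move=> uD; apply: ereal_sup_ubound; exists [set` D].
  by split; [exact: finite_seq|].
by rewrite -fsbig_seq // sumEFin.
Qed.

Lemma l2sq_ge0 xi : (0 <= l2sq xi)%E.
Proof. by apply: esum_ge0 => g _; rewrite lee_fin exprn_ge0 // normc_ge0. Qed.

Lemma l2norm_ge0 xi : (0 <= l2norm xi)%E.
Proof.
rewrite /l2norm; case: (l2sq xi) => // r; by rewrite lee_fin sqrtr_ge0.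
Qed.

Lemma l2normP xi r : 0 <= r ->
  (l2norm xi <= r%:E)%E <-> (forall D, uniq D -> Num.sqrt (sq xi D) <= r).
Proof.
move=> r0; rewrite /l2norm; have := l2sq_ge0 xi; have := @l2sq_ge xi.
have := @l2sq_le xi (r ^+ 2).
case: (l2sq xi) => [q| |] // Hle Hge q0; split.
- rewrite lee_fin => H D uD; rewrite (le_trans _ H) // ler_wsqrtr //.
  by have := Hge D uD; rewrite lee_fin.
- move=> H; have q0' : 0 <= q by rewrite -lee_fin.
  rewrite lee_fin sqrt_leP //.
  rewrite -lee_fin; apply: Hle => D uD; rewrite -sqrt_leP //; [exact: H| exact: sq_ge0].
- by [].
- move=> H; suff : (+oo <= (r ^+ 2)%:E)%E by [].
  apply: Hle => D uD; rewrite -sqrt_leP //; [exact: H| exact: sq_ge0].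
Qed.

Lemma l2normL2 xi r : (l2norm xi <= r%:E)%E <-> L2 xi r.
Proof.
split.
- move=> H; have r0 : 0 <= r by rewrite -lee_fin (le_trans (l2norm_ge0 _) H).
  by split => //; apply/l2normP.
- by case=> r0 H; apply/l2normP.
Qed.

Definition bnd (T : op R G) (r : R) := forall xi, L2 xi 1 -> L2 (T xi) r.

Lemma opnormP T r : (opnorm T <= r%:E)%E <-> bnd T r.
Proof.
split.
- move=> H xi /l2normL2 xi1; apply/l2normL2; apply: le_trans H.
  by apply: ereal_sup_ubound; exists xi.
- move=> H; apply: ge_ereal_sup => _ [xi /l2normL2 xi1 <-]; apply/l2normL2; exact: H.
Qed.


Lemma pw (t X Y : R) : 0 < t -> (X + Y) ^+ 2 <= (1 + t) * X ^+ 2 + (1 + t^-1) * Y ^+ 2.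
Proof.
move=> t0; have u0 : 0 < t^-1 by rewrite invr_gt0.
have h : 0 <= t^-1 * (t * X - Y) ^+ 2.
  by apply: mulr_ge0; [exact: ltW | exact: sqr_ge0].
have e : t^-1 * (t * X - Y) ^+ 2 = t * X ^+ 2 - 2 * X * Y + t^-1 * Y ^+ 2.
  by field; rewrite gt_eqF.
rewrite e in h; nra.
Qed.

Lemma sq_cmp (v w : G -> C) D : (forall h, normc (v h) <= normc (w h)) -> sq v D <= sq w D.
Proof.
move=> H; apply: ler_sum => g _; apply: lerXn2r; rewrite ?nnegrE ?normc_ge0 //.
Qed.

Lemma mink (a b : G -> C) D :
  Num.sqrt (sq (fun h => a h + b h) D) <= Num.sqrt (sq a D) + Num.sqrt (sq b D).
Proof.
apply/ler_addgt0Pr => e e0.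
set A := Num.sqrt (sq a D); set B := Num.sqrt (sq b D).
have A0 : 0 <= A by exact: sqrtr_ge0.
have B0 : 0 <= B by exact: sqrtr_ge0.
set s1 := A + e / 2; set s2 := B + e / 2.
have s10 : 0 < s1 by rewrite /s1; lra.
have s20 : 0 < s2 by rewrite /s2; lra.
set t := s2 / s1.
have t0 : 0 < t by rewrite divr_gt0.
have H1 : sq (fun h => a h + b h) D <= (1 + t) * sq a D + (1 + t^-1) * sq b D.
  rewrite /sq !mulr_sumr -big_split /=; apply: ler_sum => g _.
  apply: le_trans (pw _ _ t0); apply: lerXn2r; rewrite ?nnegrE ?addr_ge0 ?normc_ge0 //.
  exact: le_normcD.
have Ha : sq a D <= s1 ^+ 2.
  by rewrite -sqrt_leP ?sq_ge0 ?(ltW s10) // -/A /s1; lra.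
have Hb : sq b D <= s2 ^+ 2.
  by rewrite -sqrt_leP ?sq_ge0 ?(ltW s20) // -/B /s2; lra.
rewrite sqrt_leP ?sq_ge0; last lra.
apply: (le_trans H1).
have -> : A + B + e = s1 + s2 by rewrite /s1 /s2; field.
apply: le_trans (_ : (1 + t) * s1 ^+ 2 + (1 + t^-1) * s2 ^+ 2 <= _).
  apply: lerD; apply: ler_wpM2l => //.
  - by apply: addr_ge0 => //; exact: ltW.
  - by apply: addr_ge0 => //; rewrite invr_ge0 ltW.
rewrite /t invf_div le_eqVlt; apply/orP; left; apply/eqP; field; rewrite ?gt_eqF //.
all: by [].
Qed.

Lemma L2_mono xi r r' : L2 xi r -> r <= r' -> L2 xi r'.
Proof.
case=> r0 H rr; split; first exact: le_trans rr.
by move=> D uD; apply: le_trans (H D uD) rr.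
Qed.

Lemma L2_pt xi r h : L2 xi r -> normc (xi h) <= r.
Proof.
case=> _ /(_ [:: h] isT); rewrite /sq big_seq1 sqrtr_sqr ger0_norm //.
exact: normc_ge0.
Qed.

Lemma L2_cmp (v w : G -> C) r : (forall h, normc (v h) <= normc (w h)) -> L2 w r -> L2 v r.
Proof.
move=> H [r0 Hw]; split => // D uD; apply: le_trans (Hw D uD).
by apply: ler_wsqrtr; apply: sq_cmp.
Qed.

Lemma L2_add (a b : G -> C) r1 r2 : L2 a r1 -> L2 b r2 -> L2 (fun h => a h + b h) (r1 + r2).
Proof.
case=> r10 H1 [r20 H2]; split; first exact: addr_ge0.
move=> D uD; apply: le_trans (mink a b D) _; apply: lerD; [exact: H1|exact: H2].
Qed.

Lemma L2_opp (a : G -> C) r : L2 a r -> L2 (fun h => - a h) r.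
Proof. by apply: L2_cmp => h; rewrite normcN. Qed.

Lemma L2_sub (a b : G -> C) r1 r2 : L2 a r1 -> L2 b r2 -> L2 (fun h => a h - b h) (r1 + r2).
Proof. by move=> H1 H2; apply: L2_add H1 (L2_opp H2). Qed.

Lemma L2_scale (a : G -> C) c r : L2 a r -> L2 (fun h => c * a h) (normc c * r).
Proof.
case=> r0 H; split; first by rewrite mulr_ge0 ?normc_ge0.
move=> D uD; have -> : sq (fun h => c * a h) D = normc c ^+ 2 * sq a D.
  by rewrite /sq mulr_sumr; apply: eq_bigr => g _; rewrite normcM exprMn.
rewrite sqrtrM ?sqr_ge0 // sqrtr_sqr ger0_norm ?normc_ge0 //.
by apply: ler_wpM2l; [exact: normc_ge0 | exact: H].
Qed.

Lemma L2_lim xi r : 0 <= r -> (forall t, 0 < t -> L2 xi (r + t)) -> L2 xi r.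
Proof.
move=> r0 H; split => // D uD; apply/ler_addgt0Pr => t t0.
by case: (H t t0) => _ /(_ D uD).
Qed.

Lemma L2_0 r : 0 <= r -> L2 (fun _ : G => 0 : C) r.
Proof.
move=> r0; split => // D uD; rewrite /sq big1 ?sqrtr0 // => g _.
by rewrite normc0 expr0n.
Qed.


Implicit Types (T S : op R G) (sigma : G -> G -> C) (s : seq (C * G)).

Lemma bnd_ge0 T r : bnd T r -> 0 <= r.
Proof. by move=> /(_ _ (L2_0 ler01)) []. Qed.

Lemma lt_bnd T e : (opnorm T < e%:E)%E -> bnd T e.
Proof. by move=> /ltW /opnormP. Qed.

Lemma bnd_lt T r e : bnd T r -> r < e -> (opnorm T < e%:E)%E.
Proof. by move=> /opnormP H re; apply: le_lt_trans H _; rewrite lte_fin. Qed.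

Lemma bnd_mono T r r' : bnd T r -> r <= r' -> bnd T r'.
Proof. by move=> H rr xi /H /L2_mono; apply. Qed.

Lemma bnd_ext T S r : (forall xi h, T xi h = S xi h) -> bnd T r -> bnd S r.
Proof.
move=> E H xi /H; rewrite (_ : T xi = S xi) //; apply: funext => h; exact: E.
Qed.

Lemma bnd_add T S r1 r2 : bnd T r1 -> bnd S r2 ->
  bnd (fun xi h => T xi h + S xi h) (r1 + r2).
Proof. by move=> H1 H2 xi xi1; apply: L2_add; [exact: H1|exact: H2]. Qed.

Lemma bnd_sub T S r1 r2 : bnd T r1 -> bnd S r2 -> bnd (opsub T S) (r1 + r2).
Proof. by move=> H1 H2 xi xi1; apply: L2_sub; [exact: H1|exact: H2]. Qed.

Lemma bnd_scale T c r : bnd T r -> bnd (fun xi h => c * T xi h) (normc c * r).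
Proof. by move=> H xi xi1; apply: L2_scale; exact: H. Qed.

Lemma bnd_lim T r : 0 <= r -> (forall t, 0 < t -> bnd T (r + t)) -> bnd T r.
Proof.
by move=> r0 H xi xi1; apply: L2_lim => // t t0; exact: H.
Qed.

Definition neg s := [seq (- p.1, p.2) | p <- s].
Definition sc (c : C) s := [seq (c * p.1, p.2) | p <- s].

Lemma lincomb_cat sigma s1 s2 xi h :
  lincomb sigma (s1 ++ s2) xi h = lincomb sigma s1 xi h + lincomb sigma s2 xi h.
Proof. by rewrite /lincomb big_cat. Qed.

Lemma lincomb_neg sigma s xi h : lincomb sigma (neg s) xi h = - lincomb sigma s xi h.
Proof. by rewrite /lincomb big_map -sumrN; apply: eq_bigr => p _; rewrite mulNr. Qed.

Lemma lincomb_sc sigma c s xi h : lincomb sigma (sc c s) xi h = c * lincomb sigma s xi h.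
Proof. by rewrite /lincomb big_map mulr_sumr; apply: eq_bigr => p _; rewrite mulrA. Qed.

Lemma lincomb_nil sigma xi h : lincomb sigma [::] xi h = 0.
Proof. by rewrite /lincomb big_nil. Qed.

Lemma lincomb_cons sigma p s xi h :
  lincomb sigma (p :: s) xi h = p.1 * Lambda sigma p.2 xi h + lincomb sigma s xi h.
Proof. by rewrite /lincomb big_cons. Qed.

Lemma mult_cat phi s1 s2 : mult phi (s1 ++ s2) = mult phi s1 ++ mult phi s2.
Proof. exact: map_cat. Qed.

Lemma mult_neg phi s : mult phi (neg s) = neg (mult phi s).
Proof. by rewrite /mult /neg -!map_comp; apply: eq_map => p /=; rewrite mulrN. Qed.

Lemma mult_sc phi c s : mult phi (sc c s) = sc c (mult phi s).
Proof. by rewrite /mult /sc -!map_comp; apply: eq_map => p /=; rewrite mulrCA. Qed.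

Lemma opsub_lincomb sigma s1 s2 :
  opsub (lincomb sigma s1) (lincomb sigma s2) = lincomb sigma (s1 ++ neg s2).
Proof.
apply: funext => xi; apply: funext => h.
by rewrite /opsub lincomb_cat lincomb_neg.
Qed.

Lemma normcR (x : R) : normc (x%:C) = `|x|.
Proof. by rewrite /normc /= expr0n /= addr0 sqrtr_sqr. Qed.

Lemma L2_Lambda sigma g xi r : (forall g h, normc (sigma g h) = 1) ->
  L2 xi r -> L2 (Lambda sigma g xi) r.
Proof.
move=> s1 [r0 H]; split => // D uD.
have -> : sq (Lambda sigma g xi) D = sq xi (map (fun h => g^-1 * h)%g D).
  by rewrite /sq big_map; apply: eq_bigr => h _; rewrite /Lambda normcM s1 mul1r.
apply: H; rewrite map_inj_uniq //; exact: mulgI.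
Qed.

Lemma bnd_lincomb sigma s : (forall g h, normc (sigma g h) = 1) ->
  bnd (lincomb sigma s) (\sum_(p <- s) normc p.1).
Proof.
move=> s1; elim: s => [|p s IH] xi xi1.
  rewrite big_nil (_ : lincomb sigma [::] xi = fun _ => 0); first exact: L2_0.
  by apply: funext => h; rewrite lincomb_nil.
rewrite big_cons (_ : lincomb sigma (p :: s) xi =
   fun h => p.1 * Lambda sigma p.2 xi h + lincomb sigma s xi h).
  apply: L2_add; last exact: IH.
  rewrite -[normc p.1]mulr1; apply: L2_scale; exact: L2_Lambda.
by apply: funext => h; rewrite lincomb_cons.
Qed.


Definition abs s := [seq ((normc p.1)%:C, p.2) | p <- s].
Definition av xi : G -> C := fun h => (normc (xi h))%:C.

Lemma normc_av xi h : normc (av xi h) = normc (xi h).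
Proof. by rewrite /av normcR ger0_norm // normc_ge0. Qed.

Lemma dom_pt sigma s xi h : (forall g h, normc (sigma g h) = 1) ->
  normc (lincomb sigma s xi h) <= normc (lincomb (@trivial_cocycle R G) (abs s) (av xi) h).
Proof.
move=> s1.
set W := \sum_(p <- s) normc p.1 * normc (xi (p.2^-1 * h)%g).
have W0 : 0 <= W by apply: sumr_ge0 => p _; rewrite mulr_ge0 ?normc_ge0.
have -> : lincomb (@trivial_cocycle R G) (abs s) (av xi) h = W%:C.
  rewrite /lincomb big_map rmorph_sum; apply: eq_bigr => p _.
  by rewrite /Lambda /trivial_cocycle mul1r /av rmorphM.
rewrite normcR ger0_norm // /W; elim: s {W W0} => [|p s IH].
  by rewrite lincomb_nil big_nil normc0.
rewrite lincomb_cons big_cons; apply: le_trans (le_normcD _ _) _; apply: lerD => //.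
by rewrite normcM /Lambda normcM s1 mul1r.
Qed.

Lemma bnd_dom sigma s r : (forall g h, normc (sigma g h) = 1) ->
  bnd (lincomb (@trivial_cocycle R G) (abs s)) r -> bnd (lincomb sigma s) r.
Proof.
move=> s1 H xi xi1.
have : L2 (av xi) 1 by apply: L2_cmp xi1 => h; rewrite normc_av.
move/H; apply: L2_cmp => h; exact: dom_pt.
Qed.

Lemma MA_bnd sigma phi B s r : (MAnorm sigma phi <= B%:E)%E -> 0 <= B ->
  bnd (lincomb sigma s) r -> bnd (lincomb sigma (mult phi s)) (B * r).
Proof.
move=> HB B0 H; have r0 := bnd_ge0 H.
have core : forall u, 0 < u -> bnd (lincomb sigma s) u ->
    bnd (lincomb sigma (mult phi s)) (B * u).
  move=> u u0 Hu; set s' := sc (u^-1)%:C s.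
  have Hs' : bnd (lincomb sigma s') 1.
    have := bnd_scale (u^-1)%:C Hu.
    rewrite normcR ger0_norm ?invr_ge0 ?ltW // mulVf ?gt_eqF //.
    by apply: bnd_ext => xi h; rewrite lincomb_sc.
  have : (opnorm (lincomb sigma (mult phi s')) <= B%:E)%E.
    apply: le_trans HB; apply: ereal_sup_ubound; exists s' => //=.
    exact/opnormP.
  move/opnormP; rewrite mult_sc => HM.
  have := bnd_scale u%:C HM; rewrite normcR ger0_norm ?ltW // mulrC.
  apply: bnd_ext => xi h.
  by rewrite lincomb_sc mulrA -rmorphM /= mulfV ?gt_eqF // mul1r.
apply: bnd_lim; first exact: mulr_ge0.
move=> t t0; have B10 : 0 < B + 1 by lra.
have u0 : 0 < r + t / (B + 1) by rewrite ltr_pwDr // divr_gt0.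
apply: bnd_mono (core _ u0 (bnd_mono H _)) _.
  by rewrite lerDl divr_ge0 ?ltW.
rewrite mulrDr lerD2l mulrA ler_pdivrMr // mulrC ler_pM2l //; lra.
Qed.


Definition rlim (f : nat -> R) : R := sup [set f n - n.+1%:R^-1 | n in [set: nat]].

Lemma rlimP f : (forall n m, (n <= m)%N -> `|f m - f n| <= n.+1%:R^-1) ->
  forall n, `|rlim f - f n| <= n.+1%:R^-1.
Proof.
move=> H n; set E := [set f n - n.+1%:R^-1 | n in [set: nat]].
have hs : has_sup E.
  split; first by exists (f 0%N - 1%:R^-1); exists 0%N.
  exists (f 0%N + 1) => _ [m _ <-].
  have := H 0%N m isT; rewrite ler_norml invr1 => /andP[_ h].
  have : 0 <= m.+1%:R^-1 :> R by rewrite invr_ge0.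
  move: (m.+1%:R^-1) => i ? ; lra.
have up : rlim f <= f n + n.+1%:R^-1.
  apply: ge_sup; first by case: hs.
  move=> _ [m _ <-].
  have i0 : 0 <= m.+1%:R^-1 :> R by rewrite invr_ge0.
  have i1 : 0 <= n.+1%:R^-1 :> R by rewrite invr_ge0.
  case: (leqP m n) => [mn|/ltnW nm].
    have := H m n mn; rewrite ler_norml => /andP[h1 h2].
    move: i0 i1 h1 h2; move: (m.+1%:R^-1) (n.+1%:R^-1) => a b; lra.
  have := H n m nm; rewrite ler_norml => /andP[h1 h2].
  move: i0 i1 h1 h2; move: (m.+1%:R^-1) (n.+1%:R^-1) => a b; lra.
have lo : f n - n.+1%:R^-1 <= rlim f.
  by apply: sup_upper_bound => //; exists n.
move: up lo; rewrite ler_norml; move: (n.+1%:R^-1) => a ? ?.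
by apply/andP; split; lra.
Qed.

Lemma normc_ReIm (a b : R) : normc (a +i* b) <= `|a| + `|b|.
Proof.
rewrite /= sqrt_leP ?addr_ge0 ?normr_ge0 ?sqr_ge0 //.
have ha := real_normK (num_real a); have hb := real_normK (num_real b).
have : 0 <= `|a| * `|b| by rewrite mulr_ge0.
nra.
Qed.

Lemma Re_le_normc (z : C) : `|complex.Re z| <= normc z.
Proof.
case: z => a b /=; rewrite -sqrtr_sqr ler_wsqrtr // lerDl; exact: sqr_ge0.
Qed.

Lemma Im_le_normc (z : C) : `|complex.Im z| <= normc z.
Proof.
case: z => a b /=; rewrite -sqrtr_sqr ler_wsqrtr // lerDr; exact: sqr_ge0.
Qed.

Definition cl (u : nat -> C) : C := (rlim (fun n => complex.Re (u n))) +i* (rlim (fun n => complex.Im (u n))).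

Lemma clP u : (forall n m, (n <= m)%N -> normc (u m - u n) <= n.+1%:R^-1) ->
  forall n, normc (cl u - u n) <= 2 * n.+1%:R^-1.
Proof.
move=> H n.
have h1 := @rlimP (fun n => complex.Re (u n)).
have h2 := @rlimP (fun n => complex.Im (u n)).
have e1 : forall n m, (n <= m)%N -> `|complex.Re (u m) - complex.Re (u n)| <= n.+1%:R^-1.
  move=> k m km; apply: le_trans (H k m km).
  by case: (u m) (u k) => a b [c d]; exact: (@Re_le_normc ((a - c) +i* (b - d))).
have e2 : forall n m, (n <= m)%N -> `|complex.Im (u m) - complex.Im (u n)| <= n.+1%:R^-1.
  move=> k m km; apply: le_trans (H k m km).
  by case: (u m) (u k) => a b [c d]; exact: (@Im_le_normc ((a - c) +i* (b - d))).
have := h1 e1 n; have := h2 e2 n.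
rewrite /cl; case: (u n) => a b /= r2 r1.
apply: le_trans (normc_ReIm _ _) _; rewrite mulr2n mulrDl mul1r; exact: lerD.
Qed.

Lemma sq_le_size v D c : 0 <= c -> (forall h, normc (v h) <= c) ->
  Num.sqrt (sq v D) <= (size D)%:R * c.
Proof.
move=> c0 H; rewrite sqrt_leP ?sq_ge0 ?mulr_ge0 //; elim: D => [|g D IH].
  by rewrite /sq big_nil mul0r expr0n.
rewrite /sq big_cons -/(sq v D) /= -natr1 mulrDl mul1r.
have hg : normc (v g) ^+ 2 <= c ^+ 2.
  by apply: lerXn2r; rewrite ?nnegrE ?normc_ge0.
have : 0 <= (size D)%:R * c by rewrite mulr_ge0.
nra.
Qed.

Lemma complete (T : nat -> op R G) :
  (forall n m, (n <= m)%N -> bnd (opsub (T m) (T n)) n.+1%:R^-1) ->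
  exists y, forall n, bnd (opsub y (T n)) n.+1%:R^-1.
Proof.
move=> H; exists (fun xi h => cl (fun n => T n xi h)) => n xi xi1.
have i0 : forall k : nat, 0 < k.+1%:R^-1 :> R by move=> k; rewrite invr_gt0.
split; first exact: ltW.
move=> D uD; apply/ler_addgt0Pr => t t0.
set k := Num.bound ((size D)%:R * 2 / t).
set m := maxn n k.
have nm : (n <= m)%N by apply: leq_maxl.
have km : (k <= m)%N by apply: leq_maxr.
have Hk := @archi_boundP _ ((size D)%:R * 2 / t).
have : (size D)%:R * (2 * m.+1%:R^-1) <= t.
  have hk : (size D)%:R * 2 / t < k%:R.
    by apply: Hk; apply: divr_ge0; [apply: mulr_ge0 | exact: ltW].
  have km' : (k%:R : R) <= m.+1%:R by rewrite ler_nat; apply: leqW.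
  have m0 : (0 : R) < m.+1%:R by rewrite ltr0n.
  rewrite mulrA ler_pdivrMr // mulrC -ler_pdivrMl //.
  apply: ltW; apply: lt_le_trans km'; apply: le_lt_trans hk; by rewrite [X in X <= _]mulrC [2 * _]mulrC.
move=> Hsz.
have -> : sq (opsub (fun xi h => cl (fun n => T n xi h)) (T n) xi) D =
  sq (fun h => (T m xi h - T n xi h) + (cl (fun n => T n xi h) - T m xi h)) D.
  by apply: eq_bigr => g _; congr (normc _ ^+ 2); rewrite /opsub; ring.
apply: le_trans (mink _ _ _) _; apply: lerD.
  by case: (H n m nm xi xi1) => _; apply.
apply: le_trans (sq_le_size _ _ _) Hsz.
  by rewrite mulr_ge0 // ltW.
move=> g; apply: le_trans (clP _ m) _ => //.
by move=> a b ab; exact: (L2_pt g (H a b ab xi xi1)).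
Qed.


Lemma sq_delta D : uniq D -> sq (@delta_e R G) D = (1%g \in D)%:R.
Proof.
elim: D => [|g D IH] /=; first by rewrite /sq big_nil.
move=> /andP[gD uD]; rewrite /sq big_cons -/(sq _ D) IH // in_cons /delta_e.
case: (eqVneq g 1%g) => [eg|ne].
  by subst g; rewrite (negbTE gD) normc1 expr1n addr0.
by rewrite normc0 expr0n add0r.
Qed.

Lemma L2_delta : L2 (@delta_e R G) 1.
Proof.
split => // D uD; rewrite sq_delta // sqrt_leP ?ler0n //.
by rewrite expr1n lern1 leq_b1.
Qed.

Lemma tail xi M : L2 xi M -> forall e, 0 < e -> exists F0, uniq F0 /\ (forall D, uniq D -> (forall g, g \in D -> g \notin F0) -> sq xi D <= e).
Proof.
case=> M0 HM e e0; set E := [set sq xi D | D in [set D | uniq D]].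
have hs : has_sup E.
  split; first by exists (sq xi [::]); exists [::].
  exists (M ^+ 2) => _ [D uD <-]; rewrite -sqrt_leP ?sq_ge0 //; exact: HM.
have [_ [D0 uD0 <-] h0] := sup_adherent e0 hs.
exists D0; split => // D uD HD.
have u : uniq (D0 ++ D).
  rewrite cat_uniq uD0 uD andbT /=; apply/hasPn => g /HD //.
have : sq xi (D0 ++ D) <= sup E by apply: sup_upper_bound => //; exists (D0 ++ D).
rewrite /sq big_cat /= -!/(sq _ _); lra.
Qed.

Variable sigma : G -> G -> C.
Hypothesis s1 : forall g h, normc (sigma g h) = 1.

Lemma hat_l2 x : in_Cr sigma x -> exists M, L2 (hat x) M.
Proof.
case/(_ 1 ltr01) => s /lt_bnd /(_ _ L2_delta) H1.
have H2 := bnd_lincomb s s1 L2_delta.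
exists (1 + \sum_(p <- s) normc p.1).
apply: L2_cmp (L2_add H1 H2) => h.
by rewrite /opsub /hat subrK.
Qed.

Lemma P_eq (c : G -> C) F xi h :
  lincomb sigma [seq (c g, g) | g <- F] xi h = \sum_(g <- F) c g * Lambda sigma g xi h.
Proof. by rewrite /lincomb big_map. Qed.

Lemma P_split (c : G -> C) F F0 xi h : uniq F -> uniq F0 -> {subset F0 <= F} ->
  opsub (lincomb sigma [seq (c g, g) | g <- F]) (lincomb sigma [seq (c g, g) | g <- F0]) xi h =
  lincomb sigma [seq (c g, g) | g <- [seq g <- F | g \notin F0]] xi h.
Proof.
move=> uF uF0 sub; rewrite /opsub !P_eq.
have pe : perm_eq F (F0 ++ [seq g <- F | g \notin F0]).
  apply: uniq_perm => //.
    rewrite cat_uniq uF0 filter_uniq // andbT /=; apply/hasPn => g.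
    by rewrite mem_filter => /andP[].
  move=> g; rewrite mem_cat mem_filter.
  by case gF0: (g \in F0) => //=; rewrite (sub _ gF0).
by rewrite (perm_big _ pe) big_cat /= addrC addrK.
Qed.


Lemma small (c e : R) : 0 <= c -> 0 < e -> exists n : nat, c * n.+1%:R^-1 < e.
Proof.
move=> c0 e0; exists (Num.bound (c / e)).
set k := Num.bound (c / e).
have hk : c / e < k%:R by apply: archi_boundP; apply: divr_ge0 => //; exact: ltW.
have k1 : (k%:R : R) < k.+1%:R by rewrite ltr_nat.
have kp : (0 : R) < k.+1%:R by rewrite ltr0n.
rewrite ltr_pdivrMr // -ltr_pdivrMl // mulrC; exact: lt_trans hk k1.
Qed.

Lemma inv_mono (n m : nat) : (n <= m)%N -> m.+1%:R^-1 <= n.+1%:R^-1 :> R.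
Proof.
move=> nm; rewrite lef_pV2 ?posrE ?ltr0n // ler_nat; exact: nm.
Qed.

Lemma MCF phi : (exists kappa : G -> R, [/\ (forall g, 1 <= kappa g), decaying kappa
       & exists B : R, forall g, normc (phi g) * kappa g <= B]) -> in_MCF sigma phi.
Proof.
move=> [kappa [k1 [K HK] [Bp HBp]]] x xC.
have [M HM] := hat_l2 xC.
pose c := fun g => phi g * hat x g.
pose P := fun F => lincomb sigma [seq (c g, g) | g <- F].
pose K' := Num.max K 0; pose B' := Num.max Bp 0.
have K'0 : 0 <= K' by rewrite le_max lexx orbT.
have B'0 : 0 <= B' by rewrite le_max lexx orbT.
pose Kd := K' * B'.
have Kd0 : 0 <= Kd by rewrite mulr_ge0.
have DB : forall F, uniq F -> bnd (P F) (Kd * Num.sqrt (sq (hat x) F)).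
  move=> F uF; apply: bnd_dom s1 _.
  have := HK F (fun g => (normc (c g))%:C) uF; move/opnormP.
  rewrite (_ : [seq (_, g) | g <- F] = abs [seq (c g, g) | g <- F]); last first.
    by rewrite /abs -map_comp.
  move=> H; apply: bnd_mono H _.
  set S := Num.sqrt _.
  have S0 : 0 <= S by exact: sqrtr_ge0.
  have HS : S <= B' * Num.sqrt (sq (hat x) F).
    rewrite /S -[B' in X in _ <= X]ger0_norm // -sqrtr_sqr -sqrtrM ?sqr_ge0 //.
    apply: ler_wsqrtr; rewrite /sq mulr_sumr; apply: ler_sum => g _.
    rewrite normcR ger0_norm ?normc_ge0 // -exprMn.
    apply: lerXn2r; rewrite ?nnegrE ?mulr_ge0 ?normc_ge0 //.
      by apply: le_trans (k1 g); rewrite ler01.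
    rewrite /c normcM mulrAC; apply: ler_wpM2r; first exact: normc_ge0.
    apply: le_trans (HBp g) _; rewrite le_max lexx //.
  apply: le_trans (_ : K' * S <= _).
    by apply: ler_wpM2r => //; rewrite le_max lexx.
  by rewrite /Kd -mulrA; apply: ler_wpM2l.
have TL : forall t, 0 < t -> exists F0, uniq F0 /\
    (forall F, uniq F -> {subset F0 <= F} -> bnd (opsub (P F) (P F0)) t).
  move=> t t0; have K10 : 0 < Kd + 1 by lra.
  pose eps := (t / (Kd + 1)) ^+ 2.
  have eps0 : 0 < eps by rewrite exprn_gt0 // divr_gt0.
  have [F0 [uF0 HF0]] := tail HM eps0.
  exists F0; split => // F uF sub.
  apply: (@bnd_ext (P [seq g <- F | g \notin F0])).
    by move=> xi h; rewrite /P P_split.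
  apply: bnd_mono (DB _ (filter_uniq _ uF)) _.
  have : Num.sqrt (sq (hat x) [seq g <- F | g \notin F0]) <= t / (Kd + 1).
    rewrite sqrt_leP ?sq_ge0 //; last by apply: divr_ge0; exact: ltW.
    apply: HF0; first exact: filter_uniq.
    by move=> g; rewrite mem_filter => /andP[].
  move=> h; apply: le_trans (ler_wpM2l Kd0 h) _.
  rewrite mulrA ler_pdivrMr //; nra.
have tn0 : forall n : nat, 0 < n.+1%:R^-1 / 2 :> R.
  by move=> n; rewrite divr_gt0 // invr_gt0.
have [G0 HG0] := boolp.choice (fun n => TL _ (tn0 n)).
pose F := fix F n := if n is n'.+1 then undup (F n' ++ G0 n) else G0 0%N.
have uF : forall n, uniq (F n) by case => [|n] /=; [case: (HG0 0%N) | exact: undup_uniq].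
have GF : forall n, {subset G0 n <= F n}.
  by case => [|n] //= g gG; rewrite mem_undup mem_cat gG orbT.
have FF : forall n m, (n <= m)%N -> {subset F n <= F m}.
  move=> n m; elim: m => [|m IH]; first by rewrite leqn0 => /eqP ->.
  rewrite leq_eqVlt => /orP[/eqP -> //|]; rewrite ltnS => /IH H g /H gm /=.
  by rewrite mem_undup mem_cat gm.
have [y Hy] : exists y, forall n, bnd (opsub y (P (F n))) n.+1%:R^-1.
  apply: complete => n m nm.
  apply: (@bnd_ext (opsub (opsub (P (F m)) (P (G0 n))) (opsub (P (F n)) (P (G0 n))))).
    by move=> xi h; rewrite /opsub; ring.
  rewrite [n.+1%:R^-1]splitr; apply: bnd_sub.
    apply: (proj2 (HG0 n)) => // g /GF; exact: FF.
  by apply: (proj2 (HG0 n)) => // g /GF.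
exists y => e e0.
have [n hn] := small (ler0n R 2) e0.
exists (F n) => F' uF' sub.
apply: bnd_lt _ hn.
apply: (@bnd_ext (opsub (opsub y (P (F n))) (opsub (opsub (P F') (P (G0 n))) (opsub (P (F n)) (P (G0 n)))))).
  by move=> xi h; rewrite /opsub /P /c; ring.
rewrite (_ : 2 * n.+1%:R^-1 = n.+1%:R^-1 + (n.+1%:R^-1 / 2 + n.+1%:R^-1 / 2)); last first.
  by rewrite -splitr mulr2n mulrDl mul1r.
apply: bnd_sub; first exact: Hy.
apply: bnd_sub.
  by apply: (proj2 (HG0 n)) => // g /GF; exact: sub.
by apply: (proj2 (HG0 n)) => // g /GF.
Qed.


Lemma nS0 (n : nat) : (1 + n%:R : R) != 0.
Proof. by rewrite addrC natr1 pnatr_eq0. Qed.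

Lemma bnd_neg T r : bnd T r -> bnd (fun xi h => - T xi h) r.
Proof. by move=> H xi xi1; apply: L2_opp; exact: H. Qed.

Lemma Mext_ex phi B : (MAnorm sigma phi <= B%:E)%E -> 0 < B ->
  forall x, in_Cr sigma x -> exists y, Mext sigma phi x y.
Proof.
move=> HB B0 x xC.
pose en := fun n : nat => n.+1%:R^-1 / (2 * B).
have en0 : forall n, 0 < en n.
  by move=> n; rewrite divr_gt0 ?invr_gt0 ?ltr0n ?mulr_gt0.
have [sn Hsn] := boolp.choice (fun n => xC _ (en0 n)).
have Hs : forall n, bnd (opsub x (lincomb sigma (sn n))) (en n).
  by move=> n; apply: lt_bnd; exact: Hsn.
have Hdiff : forall n s r, bnd (opsub x (lincomb sigma s)) r ->
    bnd (lincomb sigma (mult phi (sn n ++ neg s))) (B * (r + en n)).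
  move=> n s r H; apply: MA_bnd HB (ltW B0) _.
  rewrite -opsub_lincomb.
  apply: (@bnd_ext (opsub (opsub x (lincomb sigma s)) (opsub x (lincomb sigma (sn n))))).
    by move=> xi h; rewrite /opsub; ring.
  exact: bnd_sub H (Hs n).
have [y Hy] : exists y, forall n, bnd (opsub y (lincomb sigma (mult phi (sn n)))) n.+1%:R^-1.
  apply: complete => n m nm.
  have := Hdiff m (sn n) _ (Hs n).
  rewrite mult_cat mult_neg -opsub_lincomb => H; apply: bnd_mono H _.
  have hm : en m <= en n.
    by rewrite /en ler_pM2r ?invr_gt0 ?mulr_gt0 //; apply: inv_mono.
  have -> : n.+1%:R^-1 = B * (en n + en n).
    by rewrite /en; field; rewrite gt_eqF //= -natr1 addrC lt0r_neq0 // ltr_pwDl.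
  by apply: ler_wpM2l; [exact: ltW | lra].
exists y => e e0.
have e40 : 0 < e / 4 by rewrite divr_gt0.
exists (e / (4 * B)); first by rewrite divr_gt0 ?mulr_gt0.
move=> s /lt_bnd Hsd.
have [n hn] := small ler01 e40.
rewrite mul1r in hn.
apply: (@bnd_lt _ (n.+1%:R^-1 + B * (e / (4 * B) + en n))).
  apply: (@bnd_ext (fun xi h => opsub y (lincomb sigma (mult phi (sn n))) xi h +
                   lincomb sigma (mult phi (sn n ++ neg s)) xi h)).
    by move=> xi h; rewrite mult_cat mult_neg lincomb_cat lincomb_neg /opsub; ring.
  exact: bnd_add (Hy n) (Hdiff n s _ Hsd).
have -> : B * (e / (4 * B) + en n) = e / 4 + n.+1%:R^-1 / 2.
  by rewrite /en; field; rewrite nS0 gt_eqF.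
move: hn; move: (n.+1%:R^-1) => a ha; lra.
Qed.

Lemma ev_seq A (le : A -> A -> Prop) (P : G -> A -> Prop) : directed le ->
  (forall g, exists a0, forall a, le a0 a -> P g a) ->
  forall L : seq G, exists a0, forall a, le a0 a -> forall g, g \in L -> P g a.
Proof.
case=> [[a_] refl tr dir] HP; elim => [|g L [a1 H1]].
  by exists a_ => a _ g; rewrite in_nil.
have [a2 H2] := HP g; have [c [c1 c2]] := dir a1 a2.
exists c => a ca g'; rewrite in_cons => /orP[/eqP->|gL].
  by apply: H2; exact: (tr _ _ _ c2 ca).
by apply: H1 => //; exact: (tr _ _ _ c1 ca).
Qed.

Lemma lincomb_diff phi s xi h :
  lincomb sigma [seq ((phi p.2 - 1) * p.1, p.2) | p <- s] xi h =
  lincomb sigma (mult phi s) xi h - lincomb sigma s xi h.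
Proof.
rewrite /lincomb /mult !big_map -sumrB; apply: eq_bigr => p _ /=; ring.
Qed.

Lemma conv A (le : A -> A -> Prop) (phi : A -> G -> C) B :
  directed le -> (forall a, (MAnorm sigma (phi a) <= B%:E)%E) -> 0 < B ->
  (forall g e, 0 < e -> exists a0, forall a, le a0 a -> normc (phi a g - 1) < e) ->
  forall x, in_Cr sigma x -> forall e, 0 < e -> exists a0, forall a, le a0 a ->
    forall y, Mext sigma (phi a) x y -> (opnorm (opsub y x) < e%:E)%E.
Proof.
move=> dirA HB B0 hconv x xC e e0.
have B10 : 0 < B + 1 by lra.
pose d0 := e / (8 * (B + 1)).
have d00 : 0 < d0 by rewrite divr_gt0 ?mulr_gt0.
have [s /lt_bnd Hsb] := xC _ d00.
pose S := \sum_(p <- s) normc p.1.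
have S0 : 0 <= S by apply: sumr_ge0 => p _; exact: normc_ge0.
pose eta := e / (4 * (S + 1)).
have eta0 : 0 < eta by rewrite divr_gt0 // mulr_gt0 //; lra.
have [a0 Ha0] := @ev_seq A le (fun g a => normc (phi a g - 1) <= eta) dirA
   (fun g => let: ex_intro a0 H := hconv g eta eta0 in
      ex_intro _ a0 (fun a h => ltW (H a h))) [seq p.2 | p <- s].
exists a0 => a aa0 y My.
have e40 : 0 < e / 4 by rewrite divr_gt0.
have [d dpos Hd] := My (e / 4) e40.
have dm : 0 < Num.min d d0 by rewrite lt_min dpos d00.
have [s2 Hs2] := xC _ dm.
have Hs2b := lt_bnd Hs2.
have T1 : bnd (opsub y (lincomb sigma (mult (phi a) s2))) (e / 4).
  apply: lt_bnd; apply: Hd; apply: lt_le_trans Hs2 _.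
  by rewrite lee_fin ge_min lexx.
have T2 : bnd (lincomb sigma (mult (phi a) (s2 ++ neg s))) (e / 4).
  have H : bnd (lincomb sigma (s2 ++ neg s)) (d0 + d0).
    rewrite -opsub_lincomb.
    apply: (@bnd_ext (opsub (opsub x (lincomb sigma s)) (opsub x (lincomb sigma s2)))).
      by move=> xi h; rewrite /opsub; ring.
    apply: bnd_sub Hsb (bnd_mono Hs2b _); by rewrite ge_min lexx orbT.
  apply: bnd_mono (MA_bnd (HB a) (ltW B0) H) _.
  have -> : B * (d0 + d0) = e / 4 * (B / (B + 1)).
    by rewrite /d0; field; rewrite gt_eqF.
  rewrite ger_pMr // ler_pdivrMr //; lra.
have T3 : bnd (lincomb sigma [seq ((phi a p.2 - 1) * p.1, p.2) | p <- s]) (e / 4).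
  apply: bnd_mono (bnd_lincomb _ s1) _.
  rewrite big_map /=; apply: le_trans (_ : \sum_(p <- s) eta * normc p.1 <= _).
    rewrite big_seq_cond [X in _ <= X]big_seq_cond; apply: ler_sum => p /andP[ps _].
    rewrite normcM; apply: ler_wpM2r; first exact: normc_ge0.
    by apply: Ha0 => //; apply: map_f.
  rewrite -mulr_sumr -/S /eta.
  have S10 : 0 < S + 1 by lra.
  have -> : e / (4 * (S + 1)) * S = e / 4 * (S / (S + 1)).
    by field; rewrite gt_eqF.
  rewrite ger_pMr // ler_pdivrMr //; lra.
have T4 : bnd (fun xi h => - opsub x (lincomb sigma s) xi h) d0 by exact: bnd_neg.
apply: (@bnd_lt _ (e / 4 + e / 4 + e / 4 + d0)); last first.
  have : d0 <= e / 8.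
    rewrite /d0 ler_pdivrMr ?mulr_gt0 //.
    have -> : e / 8 * (8 * (B + 1)) = e * (B + 1) by field.
    nra.
  lra.
apply: (@bnd_ext (fun xi h => opsub y (lincomb sigma (mult (phi a) s2)) xi h +
   lincomb sigma (mult (phi a) (s2 ++ neg s)) xi h +
   lincomb sigma [seq ((phi a p.2 - 1) * p.1, p.2) | p <- s] xi h +
   - opsub x (lincomb sigma s) xi h)).
  move=> xi h; rewrite lincomb_diff mult_cat mult_neg lincomb_cat lincomb_neg /opsub.
  ring.
apply: bnd_add T4; apply: bnd_add T3; exact: bnd_add T1 T2.
Qed.

End Aux.

Theorem proposition5p8 (R : realType) (G : groupType)
    (sigma : G -> G -> R[i]) (A : Type) (le : A -> A -> Prop)
    (phi : A -> G -> R[i]) :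
  is_cocycle sigma ->
  directed le ->
  (forall a, in_MA sigma (phi a)) ->
  (* (i) phi_a -> 1 pointwise *)
  (forall (g : G) (e : R), 0 < e ->
     exists a0, forall a, le a0 a -> normc (phi a g - 1) < e) ->
  (* (ii) sup_a ||M_{phi_a}|| < oo *)
  (exists B : R, forall a, (MAnorm sigma (phi a) <= B%:E)%E) ->
  (* (iii) *)
  (forall a, exists kappa : G -> R,
     [/\ (forall g, 1 <= kappa g), decaying kappa
       & exists B : R, forall g, normc (phi a g) * kappa g <= B]) ->
  bounded_Fourier_summing_net sigma le phi.
Proof.
move=> [s1 _ _] dirA hMA hconv [B0 hB] hdec.
pose B := Num.max B0 1.
have Bpos : 0 < B by rewrite lt_max ltr01 orbT.
have hB' : forall a, (MAnorm sigma (phi a) <= B%:E)%E.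
  by move=> a; apply: le_trans (hB a) _; rewrite lee_fin le_max lexx.
split.
- by move=> a; apply: MCF => //; exact: hdec.
- by exists B0.
- by move=> a x xC; apply: Mext_ex (hB' a) Bpos x xC.
- exact: (@conv _ _ sigma s1 A le phi B dirA hB' Bpos hconv).
Qed.
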